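(* Let $L$ be a commutative language with the linear property over $\Sigma=\{a_1,\dots,a_k\}$, with constant $\vec{c}$ and periods $\mathcal{P}=\{\vec{p}^{(1)},\dots,\vec{p}^{(q)}\}$, $q>0$, where every component of every period is even. Then for all even integers $m\ge 4$ and every $R=\{r\}$ with $1\le r\le m/2-1$, the decomposed base $D=X\cup(Y\lhd W)$ built from these data as described below satisfies $L=\mathcal{C}(D)$.
   Context: Notation: $\Sigma$ is the terminal alphabet, $\mathring\Sigma$ its dotted copy, $\widetilde\Sigma=\Sigma\cup\mathring\Sigma$, $\widetilde a=\{a,\mathring a\}$. $\Psi$ is the Parikh image, $\pi_\Delta$ is projection onto $\Delta$, and $\sqcup\!\sqcup$ denotes the shuffle operation. The match $@$ on letters is $a@\mathring a=\mathring a@a=a$, $\mathring a@\mathring a=\mathring a$, undefined otherwise; it extends letter-by-letter to equal-length words and to languages. $B^{@}$ is the closure of $B$ under match, and $\mathcal{C}(B)=B^{@}\cap\Sigma^*$. $\mathit{switch}$ exchanges $a$ and $\mathring a$. A language with the linear property has Parikh image $\{\vec c+n_1\vec p^{(1)}+\dots+n_q\vec p^{(q)}\mid n_i\ge0\}$; it is commutative if membership depends only on the Parikh image. For the module $m$ and set of slots $R$, let $R_m(a)=\{\mathring a\, a^{r-1}\mathring a\, a^{m-r-1}\mid r\in R\}$. The scaffold set is $sc(R)_m=\{x\mid\forall a\in\Sigma,\ \pi_{\widetilde a}(x)\in(R_m(a)\cup a)^*\}$, and the fill set is $fl(R)_m=\mathit{switch}(sc(R)_m)-\mathring\Sigma^*$.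 Appending: for $A\subseteq a^+$, factor $B=B_{\widetilde a}\cdot B_{\widetilde\Sigma-\widetilde a}$, where $B_{\widetilde a}\subseteq\widetilde\Sigma^*\widetilde a$ and $B_{\widetilde\Sigma-\widetilde a}\subseteq(\widetilde\Sigma-\widetilde a)^*$. Then $B\lhd A=B_{\widetilde a}\cdot(B_{\widetilde\Sigma-\widetilde a}\,\sqcup\!\sqcup\,A)$. For a commutative $F$, $B\lhd F$ applies $\lhd\pi_{a_i}(F)$ successively for all $i$. The sets are defined as follows: - $X=\bigcup_{\vec p\in\mathcal P}\{x\in fl(R)_m\mid\Psi(\pi_\Sigma(x))=\vec p\}$; - $Y=(R_m(a_1))^*\,\sqcup\!\sqcup\,\cdots\,\sqcup\!\sqcup\,(R_m(a_k))^*$; - $W$ is the finite commutative language with $\Psi(W)=\{\vec c+h_1\vec p^{(1)}+\dots+h_q\vec p^{(q)}\mid 0\le h_i<m/2\}$; - $D=X\cup(Y\lhd W)$, which is decomposed with scaffold $Y\lhd W$ and fill $X$. *)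

(* Defs.v *)
From mathcomp Require Import all_boot.
Set Implicit Arguments. Unset Strict Implicit. Unset Printing Implicit Defensive.

Section Defs.
Variable k : nat.

(* Terminal alphabet Sigma = 'I_k (a_1..a_k).  Extended alphabet
   Sigma~ = Sigma u dotted(Sigma): a letter (a, d) is dotted iff d = true. *)
Definition xletter := ('I_k * bool)%type.
Definition xword := seq xletter.
Definition undot (a : 'I_k) : xletter := (a, false).
Definition dot (a : 'I_k) : xletter := (a, true).

Definition parikh (w : seq 'I_k) : 'I_k -> nat := fun i => count_mem i w.

Definition comm_lang (L : seq 'I_k -> Prop) : Prop :=
  forall u v, parikh u =1 parikh v -> (L u <-> L v).

Definition lin_set (q : nat) (c : 'I_k -> nat) (p : 'I_q -> 'I_k -> nat)
  (v : 'I_k -> nat) : Prop :=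
  exists n : 'I_q -> nat, forall i, v i = c i + \sum_(j < q) n j * p j i.

Definition linear_property (L : seq 'I_k -> Prop) (q : nat) (c : 'I_k -> nat)
  (p : 'I_q -> 'I_k -> nat) : Prop :=
  forall v, (exists w, L w /\ parikh w =1 v) <-> lin_set c p v.

Definition lmatch (x y : xletter) : option xletter :=
  if x.1 == y.1 then
    if x.2 && y.2 then Some (x.1, true)
    else if x.2 || y.2 then Some (x.1, false)
    else None
  else None.

Fixpoint wmatch (u v : xword) : option xword :=
  match u, v with
  | [::], [::] => Some [::]
  | x :: u', y :: v' =>
      match lmatch x y, wmatch u' v' with
      | Some z, Some w => Some (z :: w)
      | _, _ => None
      end
  | _, _ => None
  end.

Inductive mclosure (B : xword -> Prop) : xword -> Prop :=
  | mc_base w : B w -> mclosure B w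
  | mc_match u v w : mclosure B u -> mclosure B v -> wmatch u v = Some w ->
      mclosure B w.

(* C(B) = B^@ cap Sigma^*, as a language over Sigma *)
Definition Cl (B : xword -> Prop) (w : seq 'I_k) : Prop :=
  mclosure B (map undot w).

Inductive star (T : Type) (S : seq T -> Prop) : seq T -> Prop :=
  | star_nil : star S [::]
  | star_app u v : S u -> star S v -> star S (u ++ v).

Inductive shuffle (T : Type) : seq T -> seq T -> seq T -> Prop :=
  | sh_nil : shuffle [::] [::] [::]
  | sh_l x u v w : shuffle u v w -> shuffle (x :: u) v (x :: w)
  | sh_r x u v w : shuffle u v w -> shuffle u (x :: v) (x :: w).

Definition shuffleL (T : Type) (A B : seq T -> Prop) (w : seq T) : Prop :=
  exists u v, A u /\ B v /\ shuffle u v w.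

Definition proj (a : 'I_k) (x : xword) : xword := [seq l <- x | l.1 == a].

Definition piSigma (x : xword) : seq 'I_k := [seq l.1 | l <- x & ~~ l.2].

Definition switch (x : xword) : xword := [seq (l.1, ~~ l.2) | l <- x].

(* R_m(a) for R = {r}: the single word a° a^(r-1) a° a^(m-r-1) *)
Definition Rword (m r : nat) (a : 'I_k) : xword :=
  dot a :: nseq (r - 1) (undot a) ++ dot a :: nseq (m - r - 1) (undot a).

Definition Rlang (m r : nat) (a : 'I_k) (u : xword) : Prop := u = Rword m r a.

Definition sc (m r : nat) (x : xword) : Prop :=
  forall a : 'I_k,
    star (fun u => Rlang m r a u \/ u = [:: undot a]) (proj a x).

Definition fl (m r : nat) (x : xword) : Prop :=
  (exists y, sc m r y /\ x = switch y) /\ ~~ all (fun l : xletter => l.2) x.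

Definition Xset (m r q : nat) (p : 'I_q -> 'I_k -> nat) (x : xword) : Prop :=
  fl m r x /\ exists j : 'I_q, parikh (piSigma x) =1 p j.

Definition Yset (m r : nat) : xword -> Prop :=
  foldr (fun (a : 'I_k) (acc : xword -> Prop) =>
           shuffleL (star (Rlang m r a)) acc)
        (fun w => w = [::]) (enum 'I_k).

Definition Wset (m q : nat) (c : 'I_k -> nat) (p : 'I_q -> 'I_k -> nat)
  (w : seq 'I_k) : Prop :=
  exists h : 'I_q -> nat, (forall j, h j < m %/ 2) /\
    forall i, parikh w i = c i + \sum_(j < q) h j * p j i.

(* Appending a^n to a single word x: x = u . v where u is the longest prefix
   ending with a letter of a~ (u = empty if there is none) and v contains no
   letter of a~; the result set is u . (v shuffle a^n). *)
Definition append1 (x : xword) (a : 'I_k) (n : nat) (z : xword) : Prop :=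
  let j := find (fun l : xletter => l.1 == a) (rev x) in
  let u := take (size x - j) x in
  let v := drop (size x - j) x in
  exists t, shuffle v (nseq n (undot a)) t /\ z = u ++ t.

Fixpoint append_seq (f : 'I_k -> nat) (s : seq 'I_k) (x z : xword) : Prop :=
  match s with
  | [::] => z = x
  | i :: s' => exists x', append1 x i (f i) x' /\ append_seq f s' x' z
  end.

Definition appendL (B : xword -> Prop) (F : seq 'I_k -> Prop) (z : xword) : Prop :=
  exists y w, B y /\ F w /\ append_seq (parikh w) (enum 'I_k) y z.

Definition Dset (m r q : nat) (c : 'I_k -> nat) (p : 'I_q -> 'I_k -> nat)
  (x : xword) : Prop :=
  Xset m r p x \/ appendL (Yset m r) (Wset m c p) x.

End Defs.

(* Main.v *)
Require Import Defs.
From mathcomp Require Import all_boot zify.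
Set Implicit Arguments. Unset Strict Implicit. Unset Printing Implicit Defensive.

Lemma shuffle_filter (T : Type) (P : pred T) (s : seq T) :
  shuffle (filter P s) (filter (predC P) s) s.
Proof.
elim: s => [|x s IH] /=; first by constructor.
by case: (P x) => /=; constructor.
Qed.

Lemma shuffle_filterP (T : Type) (P : pred T) u v w :
  shuffle u v w -> shuffle (filter P u) (filter P v) (filter P w).
Proof.
elim=> [|x u' v' w' _ IH|x u' v' w' _ IH] /=; first by constructor.
all: by case: (P x) => //; constructor.
Qed.

Lemma shuffle_nil_r (T : Type) (u v w : seq T) : shuffle u v w -> v = [::] -> w = u.
Proof. by elim=> [//|x u' v' w' _ IH /IH ->|]. Qed.

Lemma shuffle_nil_l (T : Type) (u v w : seq T) : shuffle u v w -> u = [::] -> w = v.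
Proof. by elim=> [//| |x u' v' w' _ IH /IH ->]. Qed.

Lemma shuffle_rcons_l (T : Type) (u v w : seq T) x :
  shuffle u v w -> shuffle (rcons u x) v (rcons w x).
Proof.
elim=> [|y u' v' w' _ IH|y u' v' w' _ IH] /=; do ! constructor => //.
Qed.

Lemma shuffle_rcons_r (T : Type) (u v w : seq T) x :
  shuffle u v w -> shuffle u (rcons v x) (rcons w x).
Proof.
elim=> [|y u' v' w' _ IH|y u' v' w' _ IH] /=; do ! constructor => //.
Qed.

Lemma shuffle_map (T U : Type) (f : T -> U) u v w :
  shuffle u v w -> shuffle (map f u) (map f v) (map f w).
Proof. by elim=> *; constructor. Qed.

Lemma star_cat (T : Type) (S : seq T -> Prop) u v : star S u -> star S v -> star S (u ++ v).
Proof. elim=> [//|u1 u2 H1 _ IH] Hv; rewrite -catA; constructor => //; exact: IH. Qed.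

Lemma star_flatten_nseq (T : Type) (S : seq T -> Prop) x n : S x -> star S (flatten (nseq n x)).
Proof. move=> Hx; elim: n => [|n IH] /=; constructor => //. Qed.

Lemma star_nseq1 (T : Type) (S : seq T -> Prop) x n : S [:: x] -> star S (nseq n x).
Proof. move=> Hx; elim: n => [|n IH] /=; first constructor. exact: (star_app Hx IH). Qed.

Lemma star_mono (T : Type) (S S' : seq T -> Prop) u : (forall x, S x -> S' x) -> star S u -> star S' u.
Proof. move=> H; elim=> *; constructor; auto. Qed.

Lemma star_single_flatten (T : Type) (x : seq T) u : star (fun v => v = x) u ->
  exists n, u = flatten (nseq n x).
Proof. elim=> [|u1 u2 -> _ [n ->]]; [by exists 0 | by exists n.+1]. Qed.

Lemma last_indep (T : Type) (d1 d2 : T) s : s <> [::] -> last d1 s = last d2 s.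
Proof. by case: s. Qed.

Lemma star_last (T : Type) (S : seq T -> Prop) (P : pred T) d u :
  (forall x, S x -> x <> [::] /\ P (last d x)) -> star S u -> u <> [::] -> P (last d u).
Proof.
move=> H; elim=> [//|u1 u2 S1 _ IH] _.
rewrite last_cat; case: u2 IH => [|y u2] IH.
  by have [] := H _ S1.
rewrite (@last_indep _ _ d) //; exact: IH.
Qed.

Lemma filter_none (T : Type) (P : pred T) s : all (predC P) s -> filter P s = [::].
Proof. by elim: s => //= x s IH /andP[/negbTE -> /IH]. Qed.

Lemma count_rcons' (T : Type) (P : pred T) s x : count P (rcons s x) = count P s + P x.
Proof. by rewrite -cats1 count_cat /= addn0. Qed.

Lemma take_find_none (T : Type) (P : pred T) s : all (predC P) (take (find P s) s).
Proof. by elim: s => //= x s IH; case Px: (P x) => //=; rewrite Px IH. Qed.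

Lemma drop_after_last k (x : xword k) a :
  all (fun l => l.1 != a) (drop (size x - find (fun l => l.1 == a) (rev x)) x).
Proof.
rewrite -(revK (drop _ _)) -take_rev all_rev.
exact: (take_find_none (fun l : xletter k => l.1 == a)).
Qed.

Lemma proj_cat k a (x y : xword k) : proj a (x ++ y) = proj a x ++ proj a y.
Proof. exact: filter_cat. Qed.

Lemma proj_nseq k (a b : 'I_k) n : proj a (nseq n (undot b)) = nseq ((b == a) * n) (undot a).
Proof.
case: eqP => [->|/eqP ba]; rewrite /proj.
  by rewrite mul1n; apply/all_filterP; rewrite all_nseq /= eqxx orbT.
by rewrite mul0n filter_none // all_nseq /= ba orbT.
Qed.

Lemma append1_proj k (x z : xword k) b n a :
  append1 x b n z -> proj a z = proj a x ++ nseq ((b == a) * n) (undot a).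
Proof.
rewrite /append1 => -[t [sh ->]].
move: (drop_after_last x b) (cat_take_drop (size x - find (fun l : xletter k => l.1 == b) (rev x)) x) sh.
move: (take _ x) (drop _ x) => u v av Hx sh.
have := shuffle_filterP (fun l : xletter k => l.1 == a) sh.
rewrite -/(proj a v) -/(proj a t) -/(proj a _) proj_nseq.
rewrite -Hx !proj_cat.
case: eqP => [ba|/eqP ba] sh'.
  subst b; have pv : proj a v = [::] by apply: filter_none.
  by rewrite pv cats0 (shuffle_nil_l sh').
rewrite mul0n /= cats0 (shuffle_nil_r sh') //.
Qed.

Lemma append_seq_proj k (f : 'I_k -> nat) s (y z : xword k) a :
  append_seq f s y z -> proj a z = proj a y ++ nseq (count_mem a s * f a) (undot a).
Proof.
elim: s y => [|b s IH] y /=; first by move=> ->; rewrite cats0.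
move=> [x' [H1 H2]]; rewrite (IH _ H2) (append1_proj a H1) -catA -nseqD mulnDl.
by case: eqP => [->|] //; rewrite !mul0n.
Qed.

Lemma all_Rword k m r (a : 'I_k) : all (fun l : xletter k => l.1 == a) (Rword m r a).
Proof. by rewrite /Rword /= all_cat !all_nseq /= all_nseq /= !eqxx !orbT. Qed.

Lemma all_flatten_nseq (T : Type) (P : pred T) n (x : seq T) : all P x -> all P (flatten (nseq n x)).
Proof. by move=> H; elim: n => //= n IH; rewrite all_cat H IH. Qed.

Lemma star_R_all k m r (a : 'I_k) u : star (Rlang m r a) u -> all (fun l : xletter k => l.1 == a) u.
Proof.
move=> /star_single_flatten [n ->]; apply: all_flatten_nseq; exact: all_Rword.
Qed.

Lemma foldr_proj k m r (s : seq 'I_k) y :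
  uniq s ->
  foldr (fun (a : 'I_k) (acc : xword k -> Prop) => shuffleL (star (Rlang m r a)) acc)
        (fun w => w = [::]) s y ->
  forall a, (a \in s -> star (Rlang m r a) (proj a y)) /\ (a \notin s -> proj a y = [::]).
Proof.
elim: s y => [|b s IH] y /=; first by move=> _ -> a.
move=> /andP[bs us] [u [v [Su [Av sh]]]] a.
have [IH1 IH2] := IH v us Av a.
have alu := star_R_all Su.
have := shuffle_filterP (fun l : xletter k => l.1 == a) sh.
rewrite -/(proj a u) -/(proj a v) -/(proj a y) inE.
case: eqP => [eab|/eqP ab] sh'.
  subst b; have pu : proj a u = u by apply/all_filterP.
  by rewrite pu in sh'; rewrite (shuffle_nil_r sh') ?IH2.
have pu : proj a u = [::].
  apply: filter_none; apply: sub_all alu => l /= /eqP lb /=.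
  by rewrite lb; apply/eqP => ba; rewrite ba eqxx in ab.
by rewrite (shuffle_nil_l sh' pu) /=.
Qed.

Lemma Yset_proj k m r (y : xword k) : Yset m r y -> forall a, star (Rlang m r a) (proj a y).
Proof.
move=> H a; have [H1 _] := foldr_proj (enum_uniq 'I_k) H a; apply: H1; exact: mem_enum.
Qed.

Lemma foldr_intro k m r (s : seq 'I_k) y :
  uniq s -> all (fun l : xletter k => l.1 \in s) y ->
  (forall a, a \in s -> star (Rlang m r a) (proj a y)) ->
  foldr (fun (a : 'I_k) (acc : xword k -> Prop) => shuffleL (star (Rlang m r a)) acc)
        (fun w => w = [::]) s y.
Proof.
elim: s y => [|b s IH] y /=; first by case: y.
move=> /andP[bs us] ally H.
exists (proj b y), (filter (fun l : xletter k => l.1 != b) y); split.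
  by apply: H; rewrite inE eqxx.
split; last exact: (shuffle_filter (fun l : xletter k => l.1 == b)).
apply: IH => //.
  rewrite all_filter; apply: sub_all ally => l /=; rewrite inE.
  by case: eqP => //= _ ->.
move=> a sa; have := H a; rewrite inE sa orbT => /(_ isT).
rewrite /proj -filter_predI; congr star; apply: eq_filter => l /=.
case: eqP => [->|] //=; case: eqP => [ab|//]; by subst; rewrite sa in bs.
Qed.

Lemma Yset_intro k m r (y : xword k) : (forall a, star (Rlang m r a) (proj a y)) -> Yset m r y.
Proof.
move=> H; apply: foldr_intro; [exact: enum_uniq| |by move=> a _; apply: H].
by apply/allP => l _; rewrite mem_enum.
Qed.

Fixpoint occ_aux k (cnt : 'I_k -> nat) (w : seq 'I_k) : seq ('I_k * nat) :=
  match w with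
  | [::] => [::]
  | a :: w' => (a, cnt a) :: occ_aux (fun b => cnt b + (b == a)) w'
  end.
Definition occ k (w : seq 'I_k) := occ_aux (fun _ => 0) w.

Lemma occ_fst k (cnt : 'I_k -> nat) w : map fst (occ_aux cnt w) = w.
Proof. by elim: w cnt => [|a w IH] cnt //=; rewrite IH. Qed.

Lemma occ_proj k (cnt : 'I_k -> nat) w a :
  [seq e <- occ_aux cnt w | e.1 == a] = [seq (a, o) | o <- iota (cnt a) (count_mem a w)].
Proof.
elim: w cnt => [|b w IH] cnt //=; rewrite IH /=.
case: eqP => [->|/eqP nba]; first by rewrite eqxx addn1.
by rewrite eq_sym (negbTE nba) addn0.
Qed.

Lemma proj_mkw k (P : 'I_k -> nat -> bool) w a :
  proj a (map (fun e => (e.1, P e.1 e.2)) (occ w)) =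
  [seq (a, P a o) | o <- iota 0 (count_mem a w)].
Proof.
rewrite /proj filter_map (eq_filter (a2 := fun e : 'I_k * nat => e.1 == a)) //.
rewrite /occ occ_proj -map_comp; apply: eq_map => o /=; done.
Qed.

Lemma map_const_in (T U : eqType) (f : T -> U) y s :
  (forall x, x \in s -> f x = y) -> map f s = nseq (size s) y.
Proof.
elim: s => [|x s IH] H //=; rewrite H ?mem_head // IH // => z zs.
by apply: H; rewrite inE zs orbT.
Qed.

Definition hole (m r o : nat) := (o %% m == 0) || (o %% m == r).

Lemma mod_block m b i : i < m -> (m * b + i) %% m = i.
Proof. by move=> im; rewrite mulnC modnMDl modn_small. Qed.

Lemma Bl_eq k m r (a : 'I_k) : 0 < r -> r < m ->
  [seq (a, hole m r i) | i <- iota 0 m] = Rword m r a.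
Proof.
move=> r0 rm.
have E : m = 1 + ((r - 1) + (1 + (m - r - 1))) by lia.
rewrite [in iota 0 m]E !iotaD !map_cat /Rword /=.
have -> : 0 + 1 + (r - 1) = r by lia.
rewrite /hole mod0n eqxx /= modn_small // eqxx orbT.
congr (_ :: _ ++ _ :: _).
  rewrite (@map_const_in _ _ _ (undot a)) ?size_iota // => i; rewrite mem_iota => /andP[i1 i2].
  by rewrite modn_small; [congr pair; apply/negbTE; rewrite negb_or; apply/andP; split; apply/eqP; lia | lia].
rewrite (@map_const_in _ _ _ (undot a)) ?size_iota // => i; rewrite mem_iota => /andP[i1 i2].
by rewrite modn_small; [congr pair; apply/negbTE; rewrite negb_or; apply/andP; split; apply/eqP; lia | lia].
Qed.

Lemma blocks k m r (a : 'I_k) d b : 0 < m ->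
  [seq (a, hole m r o) | o <- iota (m * b) (m * d)] =
  flatten (nseq d [seq (a, hole m r i) | i <- iota 0 m]).
Proof.
move=> m0; elim: d b => [|d IH] b; first by rewrite muln0.
rewrite mulnS iotaD map_cat /= -(IH b.+1) mulnS addnC; congr (_ ++ _).
rewrite -{1}[m * b]addn0 iotaDl -map_comp; apply/eq_in_map => i.
rewrite mem_iota /= /hole add0n => im; by rewrite mod_block // modn_small.
Qed.

Lemma key k m r (a : 'I_k) lo hi N : 0 < m -> lo <= hi -> m * hi <= N ->
  [seq (a, hole m r o && (lo <= o %/ m) && (o %/ m < hi)) | o <- iota 0 N]
  = nseq (m * lo) (undot a) ++
    flatten (nseq (hi - lo) [seq (a, hole m r i) | i <- iota 0 m]) ++
    nseq (N - m * hi) (undot a).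
Proof.
move=> m0 lh hN.
have lh' : m * lo <= m * hi by rewrite leq_mul2l lh orbT.
have E : N = m * lo + (m * (hi - lo) + (N - m * hi)) by rewrite mulnBr; lia.
rewrite [in iota 0 N]E !iotaD !map_cat add0n.
congr (_ ++ _ ++ _).
- rewrite (@map_const_in _ _ _ (undot a)) ?size_iota // => o.
  rewrite mem_iota => /andP[_ o1]; rewrite leq_divRL //.
  have -> : (lo * m <= o) = false by apply/negbTE; rewrite -ltnNge; lia.
  by rewrite andbF.
- rewrite -(@blocks _ m r a _ lo) //; apply/eq_in_map => o.
  rewrite mem_iota => /andP[o1 o2].
  rewrite leq_divRL // ltn_divLR //.
  have -> : lo * m <= o by lia.
  have -> : o < hi * m by rewrite mulnBr in o2; lia.
  by rewrite !andbT.
- rewrite (@map_const_in _ _ _ (undot a)) ?size_iota // => o.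
  rewrite mem_iota => /andP[o1 _]; rewrite ltn_divLR //.
  have -> : (o < hi * m) = false by apply/negbTE; rewrite -leqNgt; rewrite mulnBr in o1; lia.
  by rewrite andbF.
Qed.

Definition Nn k (a : 'I_k) (x : xword k) := size (proj a x).
Definition Uu k (a : 'I_k) (x : xword k) := count (fun l : xletter k => ~~ l.2) (proj a x).
Definition mono k q (p : 'I_q -> 'I_k -> nat) (v : 'I_k -> nat) :=
  exists n : 'I_q -> nat, forall i, v i = \sum_(j < q) n j * p j i.

Definition Finv k q (p : 'I_q -> 'I_k -> nat) (x : xword k) :=
  (exists e x', x = e :: x' /\ (last e x').2) /\ mono p (fun a => Uu a x).

Definition Sinv k q (c : 'I_k -> nat) (p : 'I_q -> 'I_k -> nat) m r (x : xword k) :=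
  exists t nb v, [/\ lin_set c p t, mono p v & forall a,
    [/\ Nn a x = t a + m * nb a, Uu a x + 2 * nb a = t a + m * nb a + v a &
        forall o, o < Nn a x -> (nth (a, false) (proj a x) o).2 -> hole m r o && (o %/ m < nb a)]].

Definition Inv k q c p m r (x : xword k) := @Finv k q p x \/ @Sinv k q c p m r x.

Lemma mono_add k q (p : 'I_q -> 'I_k -> nat) v1 v2 :
  mono p v1 -> mono p v2 -> mono p (fun a => v1 a + v2 a).
Proof.
move=> [n1 H1] [n2 H2]; exists (fun j => n1 j + n2 j) => i.
by rewrite H1 H2 -big_split /=; apply: eq_bigr => j _; rewrite mulnDl.
Qed.

Lemma lmatch_spec k (x y z : xletter k) :
  lmatch x y = Some z -> [/\ x.1 = y.1, x.2 || y.2 & z = (x.1, x.2 && y.2)].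
Proof.
case: x y => a b [a' b']; rewrite /lmatch /=.
case: eqP => // <-; by case: b; case: b' => //= -[<-].
Qed.

Lemma wmatch_spec k (u v w : xword k) : wmatch u v = Some w ->
  exists s : seq (xletter k * bool),
    [/\ u = map fst s, v = map (fun e => (e.1.1, e.2)) s,
        w = map (fun e => (e.1.1, e.1.2 && e.2)) s & all (fun e => e.1.2 || e.2) s].
Proof.
elim: u v w => [|x u IH] [|y v] w //=; first by move=> [<-]; exists [::].
case E1: (lmatch x y) => [z|] //; case E2: (wmatch u v) => [w'|] // [<-].
have [s [-> -> -> al]] := IH _ _ E2.
have [xy xy2 ->] := lmatch_spec E1.
exists ((x, y.2) :: s); split => //=; last by rewrite xy2.
by rewrite xy; case: y {xy xy2 E1}.
Qed.

Lemma proj_map k (g : xletter k * bool -> xletter k) (s : seq (xletter k * bool)) a :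
  (forall e, (g e).1 = e.1.1) -> proj a (map g s) = map g (filter (fun e => e.1.1 == a) s).
Proof. by move=> H; rewrite /proj filter_map; congr map; apply: eq_filter => e; rewrite /= H. Qed.

Lemma cnt_split k (sa : seq (xletter k * bool)) : all (fun e => e.1.2 || e.2) sa ->
  count (fun e => ~~ (e.1.2 && e.2)) sa = count (fun e => ~~ e.1.2) sa + count (fun e => ~~ e.2) sa.
Proof.
elim: sa => //= e sa IH /andP[H /IH ->].
by case: e H => [[a b] b'] /=; case: b; case: b' => //= _; rewrite ?add0n ?addnS.
Qed.

Lemma mono_ext k q (p : 'I_q -> 'I_k -> nat) v1 v2 :
  (forall a, v1 a = v2 a) -> mono p v1 -> mono p v2.
Proof. by move=> E [n H]; exists n => i; rewrite -E. Qed.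

Lemma Inv_match k q (c : 'I_k -> nat) (p : 'I_q -> 'I_k -> nat) m r (u v w : xword k) :
  4 <= m -> 1 <= r -> r < m ->
  Inv c p m r u -> Inv c p m r v -> wmatch u v = Some w -> Inv c p m r w.
Proof.
move=> m4 r1 rm Iu Iv /wmatch_spec [s [Eu Ev Ew al]].
pose sa a := filter (fun e : xletter k * bool => e.1.1 == a) s.
have alsa : forall a, all (fun e => e.1.2 || e.2) (sa a) by move=> a; rewrite all_filter; apply: sub_all al => e /= ->; rewrite implybT.
have Pu : forall a, proj a u = map fst (sa a) by move=> a; rewrite Eu proj_map.
have Pv : forall a, proj a v = map (fun e => (e.1.1, e.2)) (sa a) by move=> a; rewrite Ev proj_map.
have Pw : forall a, proj a w = map (fun e => (e.1.1, e.1.2 && e.2)) (sa a) by move=> a; rewrite Ew proj_map.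
have Nu : forall a, Nn a u = size (sa a) by move=> a; rewrite /Nn Pu size_map.
have Nv : forall a, Nn a v = size (sa a) by move=> a; rewrite /Nn Pv size_map.
have Nw : forall a, Nn a w = size (sa a) by move=> a; rewrite /Nn Pw size_map.
have Uw : forall a, Uu a w = Uu a u + Uu a v.
  by move=> a; rewrite /Uu Pw Pu Pv !count_map -cnt_split.
pose e0 (a : 'I_k) := ((a, false), false) : xletter k * bool.
have Du : forall a o, o < size (sa a) -> (nth (a, false) (proj a u) o).2 = (nth (e0 a) (sa a) o).1.2.
  by move=> a o os; rewrite Pu (nth_map (e0 a)).
have Dv : forall a o, o < size (sa a) -> (nth (a, false) (proj a v) o).2 = (nth (e0 a) (sa a) o).2.
  by move=> a o os; rewrite Pv (nth_map (e0 a)).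
have Dw : forall a o, o < size (sa a) -> (nth (a, false) (proj a w) o).2 =
    (nth (e0 a) (sa a) o).1.2 && (nth (e0 a) (sa a) o).2.
  by move=> a o os; rewrite Pw (nth_map (e0 a)).
have SF : forall x y, Sinv c p m r x -> Finv p y -> (forall a, Nn a w = Nn a x) ->
    (forall a, Uu a w = Uu a x + Uu a y) ->
    (forall a o, o < Nn a w -> (nth (a, false) (proj a w) o).2 -> (nth (a, false) (proj a x) o).2) ->
    Inv c p m r w.
  move=> x y [t [nb [vv [lt mv H]]]] [_ my] NE UE DE; right.
  exists t, nb, (fun a => vv a + Uu a y); split => //; first exact: mono_add.
  move=> a; have [H1 H2 H3] := H a; split.
  - by rewrite NE.
  - by rewrite UE -addnA (addnC (Uu a y)) addnA H2 addnA.
  - by move=> o oN /(DE a o oN); apply: H3; rewrite -NE.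
case: Iu => [Fu|Su]; case: Iv => [Fv|Sv].
-
  left; split; last by apply: (mono_ext _ (mono_add Fu.2 Fv.2)) => a; rewrite Uw.
  case: Fu Fv => [[e [x' [Eu' lu]]] _] [[e' [y' [Ev' lv]]] _].
  case: s Eu Ev Ew al {sa alsa Pu Pv Pw Nu Nv Nw Uw Du Dv Dw SF} => [|e1 s'] Eu Ev Ew al.
    by rewrite Eu in Eu'.
  exists (e1.1.1, e1.1.2 && e1.2), [seq (e.1.1, e.1.2 && e.2) | e <- s']; split => //.
  rewrite Eu /= in Eu'; rewrite Ev /= in Ev'; case: Eu' => ee ex; case: Ev' => ee' ey.
  rewrite -ee -ex (last_map fst) in lu; rewrite -ee' -ey (last_map (fun e => (e.1.1, e.2))) in lv.
  by rewrite (last_map (fun e => (e.1.1, e.1.2 && e.2))) /=; apply/andP.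
- apply: (SF v u) => //; first by move=> a; rewrite Nw Nv.
  + by move=> a; rewrite addnC.
  + by move=> a o; rewrite Nw => oN; rewrite Dw // Dv // => /andP[].
- apply: (SF u v) => //; first by move=> a; rewrite Nw Nu.
  + by move=> a o; rewrite Nw => oN; rewrite Dw // Du // => /andP[].
- case Es: s => [|e1 s'].
    by right; rewrite Ew Es; rewrite Eu Es in Su.
  exfalso; set a := e1.1.1.
  have N1 : 0 < size (sa a) by rewrite /sa Es /= eqxx.
  have kill : forall o, o < size (sa a) ->
      (forall x, Sinv c p m r x -> Nn a x = size (sa a) -> ~~ (nth (a, false) (proj a x) o).2) -> False.
    move=> o oN H; have := H _ Su (Nu a); have := H _ Sv (Nv a).
    rewrite Du // Dv // => n1 n2.
    by move: (all_nthP (e0 a) (alsa a) o oN); rewrite /= (negbTE n1) (negbTE n2).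
  case: (leqP (size (sa a)) 2) => HN.
  + apply: (kill 0) => // x [t [nb [vv [_ _ H]]]] NxN; apply/negP => dx.
    have [H1 _ H3] := H a; have /andP[_ hn] : hole m r 0 && (0 %/ m < nb a) by apply: H3 => //; rewrite NxN.
    rewrite div0n in hn; have : m <= m * nb a by rewrite leq_pmulr.
    lia.
  + apply: (kill (if r == 1 then 2 else 1)); first by case: (r == 1); lia.
    move=> x [t [nb [vv [_ _ H]]]] NxN; apply/negP => dx.
    have [H1 _ H3] := H a.
    have /andP[ho _] : hole m r (if r == 1 then 2 else 1) && ((if r == 1 then 2 else 1) %/ m < nb a).
      by apply: H3 => //; rewrite NxN; case: (r == 1); lia.
    move: ho; rewrite /hole modn_small; last by case: (r == 1); lia.
    case: (r =P 1) => [->|r1'] //=.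
    by rewrite /= eq_sym (negbTE (introN eqP r1')).
Qed.

Lemma cnt_piSigma k (x : xword k) a : count_mem a (piSigma x) = Uu a x.
Proof.
rewrite /piSigma /Uu /proj count_map !count_filter; apply: eq_count => l /=.
by rewrite andbC.
Qed.

Lemma sum_delta q (f : 'I_q -> nat) j : \sum_(j' < q) (j' == j) * f j' = f j.
Proof.
rewrite (bigD1 j) //= eqxx mul1n big1 ?addn0 // => j' /negbTE ->; by rewrite mul0n.
Qed.

Lemma proj_switch k (y : xword k) a :
  proj a (switch y) = map (fun l => (l.1, ~~ l.2)) (proj a y).
Proof. by rewrite /proj /switch filter_map; congr map; apply: eq_filter. Qed.

Lemma last_Rword k m r (a : 'I_k) d : r.+1 < m ->
  Rword m r a <> [::] /\ ~~ (last d (Rword m r a)).2.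
Proof.
move=> rm; split => //; rewrite /Rword /= last_cat /=.
case E: (m - r - 1) => [|n]; first lia.
by rewrite /=; elim: n {E} => //.
Qed.

Lemma X_inv k q (c : 'I_k -> nat) (p : 'I_q -> 'I_k -> nat) m r (x : xword k) :
  r.+1 < m -> Xset m r p x -> Inv c p m r x.
Proof.
move=> rm [[[y [scy ->]] nall] [j pj]]; left; split; last first.
  by exists (fun j' => (j' == j) : nat) => i; rewrite sum_delta -cnt_piSigma; exact: pj i.
case E: (switch y) nall => [|e x'] nall //.
exists e, x'; split => //.
set l := last e x'; set a := l.1.
pose sw := fun l : xletter k => (l.1, ~~ l.2).
have Hx : proj a (e :: x') = rcons (proj a (belast e x')) l.
  by rewrite lastI /proj filter_rcons -/l /a eqxx.
rewrite -E proj_switch in Hx.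
have ny : proj a y <> [::].
  by move=> h; move: Hx; rewrite h /= => /(congr1 size); rewrite size_rcons.
have lu : ~~ (last (undot a) (proj a y)).2.
  apply: (star_last (P := fun l : xletter k => ~~ l.2) _ (scy a)) => // u [->|->].
    exact: last_Rword.
  by [].
have := congr1 (last (sw (undot a))) Hx.
rewrite last_rcons (last_map sw) => <-.
by rewrite /sw /=.
Qed.

Lemma size_flatten_nseq (T : Type) n (x : seq T) : size (flatten (nseq n x)) = n * size x.
Proof. by elim: n => //= n IH; rewrite size_cat IH mulSn. Qed.

Lemma count_flatten_nseq (T : Type) (P : pred T) n (x : seq T) :
  count P (flatten (nseq n x)) = n * count P x.
Proof. by elim: n => //= n IH; rewrite count_cat IH mulSn. Qed.

Lemma YW_inv k q (c : 'I_k -> nat) (p : 'I_q -> 'I_k -> nat) m r (z : xword k) :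
  1 <= r -> r.+1 < m -> appendL (Yset m r) (Wset m c p) z -> Inv c p m r z.
Proof.
move=> r1 rm [y [wW [Yy [[h [hlt hp]] Ap]]]]; right.
have m0 : 0 < m by lia.
exists (parikh wW), (fun a => size (proj a y) %/ m), (fun _ => 0); split.
- by exists h => i; exact: hp i.
- by exists (fun _ => 0) => i; rewrite big1.
move=> a.
have Pz : proj a z = proj a y ++ nseq (parikh wW a) (undot a).
  by rewrite (append_seq_proj a Ap) count_uniq_mem ?enum_uniq // mem_enum mul1n.
have [n Pn] := star_single_flatten (Yset_proj Yy a).
have sR : size (Rword m r a) = m by rewrite /Rword /= size_cat /= !size_nseq; lia.
have cR : count (fun l : xletter k => ~~ l.2) (Rword m r a) = m - 2.
  by rewrite /Rword /= count_cat /= !count_nseq /=; lia.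
rewrite Pn size_flatten_nseq sR mulnK //.
have Kz : proj a z = [seq (a, hole m r o && (0 <= o %/ m) && (o %/ m < n)) | o <- iota 0 (m * n + parikh wW a)].
  rewrite key //; last by rewrite leq_addr.
  by rewrite Pz Pn Bl_eq ?subn0 ?muln0 ?addKn //; lia.
split.
- by rewrite /Nn Kz size_map size_iota addnC.
- rewrite /Uu Pz Pn count_cat count_flatten_nseq count_nseq cR /= mul1n addn0.
  have : 2 <= m by lia.
  move=> m2; rewrite mulnBr; have : n * 2 <= n * m by rewrite leq_mul2l m2 orbT.
  lia.
- move=> o; rewrite /Nn Kz size_map size_iota => oN.
  rewrite (nth_map 0) ?size_iota // nth_iota // add0n /=.
  by case/andP => /andP[-> _] ->.
Qed.

Lemma final_inv k q (c : 'I_k -> nat) (p : 'I_q -> 'I_k -> nat) m r (w : seq 'I_k) :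
  ~~ odd m -> Inv c p m r (map (@undot k) w) -> lin_set c p (parikh w).
Proof.
move=> em [[[e [x' [Ex le]]] _]|[t [nb [vv [[n1 Ht] [n2 Hv] H]]]]].
  have : last e x' \in map (@undot k) w by rewrite Ex mem_last.
  by case/mapP => b _ E; rewrite E in le.
have mE : m = 2 * (m %/ 2) by rewrite mulnC divnK // dvdn2.
exists (fun j => n1 j + m %/ 2 * n2 j) => i.
have [H1 H2 _] := H i.
have Pw : proj i (map (@undot k) w) = map (@undot k) (filter (pred1 i) w).
  by rewrite /proj filter_map.
have N1 : Nn i (map (@undot k) w) = count_mem i w by rewrite /Nn Pw size_map size_filter.
have U1 : Uu i (map (@undot k) w) = count_mem i w.
  by rewrite /Uu Pw count_map (eq_count (a2 := predT)) // count_predT size_filter.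
rewrite N1 in H1; rewrite U1 in H2.
have E2 : 2 * nb i = vv i by lia.
rewrite /parikh H1 Ht -addnA; congr (_ + _).
rewrite [X in _ = X](eq_bigr (fun j => n1 j * p j i + m %/ 2 * (n2 j * p j i))); last by move=> j _; rewrite mulnDl mulnA.
rewrite big_split /= -big_distrr /= -Hv -E2; congr (_ + _).
by rewrite mulnA (mulnC (m %/ 2) 2) -mE.
Qed.

Lemma append1_intro k (x z : xword k) a n u v t (d : xletter k) :
  x = u ++ v -> d.1 == a -> (last d u).1 == a -> all (fun l => l.1 != a) v ->
  shuffle v (nseq n (undot a)) t -> z = u ++ t -> append1 x a n z.
Proof.
move=> -> da lu av sh ->; rewrite /append1.
have hv : ~~ has (fun l : xletter k => l.1 == a) v by rewrite -all_predC.
have -> : find (fun l : xletter k => l.1 == a) (rev (u ++ v)) = size v.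
  rewrite rev_cat find_cat has_rev (negbTE hv) size_rev.
  case/lastP: u lu => [|u' y] lu; first by rewrite addn0.
  by rewrite rev_rcons /= -(last_rcons d u' y) lu addn0.
rewrite size_cat addnK take_size_cat // drop_size_cat //.
by exists t.
Qed.

Lemma occ_split k (a : 'I_k) (M : nat) (K' : pred ('I_k * nat)) (O : seq ('I_k * nat)) :
  [seq e.2 | e <- O & e.1 == a] = iota 0 (count (fun e => e.1 == a) O) ->
  (forall e, e \in O -> e.1 == a -> K' e) ->
  exists u v t,
    [/\ filter (fun e => K' e && ~~ ((e.1 == a) && (M <= e.2))) O = u ++ v,
        filter K' O = u ++ t,
        shuffle v (filter (fun e => (e.1 == a) && (M <= e.2)) O) t,
        (last (a, 0) u).1 == a &
        all (fun e => e.1 != a) v].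
Proof.
elim/last_ind: O => [|O e IH] Hi HK.
  by exists [::], [::], [::]; split => //; constructor.
have HK' : forall x, x \in O -> x.1 == a -> K' x.
  by move=> x xO; apply: HK; rewrite mem_rcons inE xO orbT.
have Ke : e.1 == a -> K' e by apply: HK; rewrite mem_rcons mem_head.
rewrite !filter_rcons.
move: Hi; rewrite filter_rcons count_rcons'.
case ea: (e.1 == a) => /= Hi.
- rewrite map_rcons addn1 -addn1 iotaD add0n cats1 in Hi.
  case: (rcons_inj Hi) => Hi' e2.
  rewrite (Ke ea).
  case: (leqP M e.2) => Me /=.
  + have [u [v [t [H1 H2 H3 H4 H5]]]] := IH Hi' HK'.
    exists u, v, (rcons t e); split => //.
    * by rewrite H2 rcons_cat.
    * exact: shuffle_rcons_r.
  + have small : forall x, x \in O -> x.1 == a -> x.2 < M.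
      move=> x xO xa.
      have : x.2 \in [seq e.2 | e <- O & e.1 == a] by apply: map_f; rewrite mem_filter xa.
      by rewrite Hi' mem_iota -e2 => /andP[_ ?]; lia.
    have EF : filter (fun e => K' e && ~~ ((e.1 == a) && (M <= e.2))) O = filter K' O.
      apply: eq_in_filter => x xO; case xa: (x.1 == a) => /=; last by rewrite andbT.
      by rewrite leqNgt (small x xO xa) andbT.
    have EB : filter (fun e => (e.1 == a) && (M <= e.2)) O = [::].
      apply: filter_none; apply/allP => x xO /=; case xa: (x.1 == a) => //=.
      by rewrite -ltnNge small.
    exists (rcons (filter K' O) e), [::], [::]; split => //.
    * by rewrite EF cats0.
    * by rewrite cats0.
    * by rewrite EB; constructor.
    * by rewrite last_rcons.
- rewrite addn0 in Hi.
  have [u [v [t [H1 H2 H3 H4 H5]]]] := IH Hi HK'.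
  rewrite andbT.
  case: (K' e) => /=.
  + exists u, (rcons v e), (rcons t e); split => //.
    * by rewrite H1 rcons_cat.
    * by rewrite H2 rcons_cat.
    * exact: shuffle_rcons_l.
    * by rewrite all_rcons H5 ea.
  + by exists u, v, t.
Qed.

Lemma wmatch_map k (O : seq ('I_k * nat)) (P Q : pred ('I_k * nat)) :
  all (fun e => P e || Q e) O ->
  wmatch (map (fun e => (e.1, P e)) O) (map (fun e => (e.1, Q e)) O) =
  Some (map (fun e => (e.1, P e && Q e)) O).
Proof.
elim: O => //= e O IH /andP[pq /IH ->].
rewrite /lmatch /= eqxx.
by case: (P e) pq; case: (Q e).
Qed.

Definition mkw k (w : seq 'I_k) (P : 'I_k -> nat -> bool) : xword k :=
  map (fun e => (e.1, P e.1 e.2)) (occ w).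

Lemma interval_bool (lo hi nb d : nat) : lo <= hi -> hi <= nb ->
  ((lo <= d) && (d < nb)) && ~~ ((lo <= d) && (d < hi)) = (hi <= d) && (d < nb).
Proof.
move=> H1 H2; case: (leqP lo d) => H3; case: (ltnP d hi) => H4; case: (ltnP d nb) => H5 //=; lia.
Qed.

Lemma count_iota_ge M N : count (fun o => M <= o) (iota 0 N) = N - M.
Proof.
elim: N => [|N IH] //; rewrite -addn1 iotaD count_cat IH /= add0n addn0.
case: (leqP M N) => h /=; lia.
Qed.

Lemma filter_iota_lt M N : M <= N -> filter (fun o => o < M) (iota 0 N) = iota 0 M.
Proof.
move=> MN; rewrite -(subnKC MN) iotaD filter_cat add0n.
rewrite (eq_in_filter (a2 := predT)) ?filter_predT; last by move=> o; rewrite mem_iota.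
rewrite filter_none ?cats0 //; apply/allP => o; rewrite mem_iota /= -leqNgt.
by case/andP.
Qed.

Lemma sum_js q (l : 'I_q -> nat) (F : 'I_q -> nat) :
  \sum_(j <- flatten [seq nseq (l j) j | j <- enum 'I_q]) F j = \sum_(j < q) l j * F j.
Proof.
rewrite big_flatten /= big_map big_enum /=.
by apply: eq_bigr => j _; rewrite big_nseq iter_addn_0 mulnC.
Qed.

Lemma occ_hyp k (w : seq 'I_k) a :
  [seq e.2 | e <- occ w & e.1 == a] = iota 0 (count (fun e => e.1 == a) (occ w)) /\
  count (fun e => e.1 == a) (occ w) = count_mem a w.
Proof.
have E := occ_proj (fun _ => 0) w a.
have C : count (fun e => e.1 == a) (occ w) = count_mem a w.
  by rewrite -size_filter /occ E size_map size_iota.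
split => //; rewrite C /occ E -map_comp map_id_in //.
Qed.

Lemma proj_Z k (w : seq 'I_k) (P K : 'I_k -> nat -> bool) a :
  proj a (map (fun e => (e.1, P e.1 e.2)) (filter (fun e => K e.1 e.2) (occ w))) =
  [seq (a, P a o) | o <- filter (K a) (iota 0 (count_mem a w))].
Proof.
rewrite /proj filter_map -filter_predI.
rewrite (eq_filter (a2 := predI (fun e : 'I_k * nat => K e.1 e.2) (fun e => e.1 == a))); last first.
  by move=> e /=; rewrite andbC.
rewrite filter_predI /occ occ_proj filter_map -!map_comp; apply/eq_in_map => o /=.
done.
Qed.

Lemma count_snd_Rword k m r (a : 'I_k) : count (fun l : xletter k => l.2) (Rword m r a) = 2.
Proof. by rewrite /Rword /= count_cat /= !count_nseq /= ?muln0 ?mul0n. Qed.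

Lemma interval_or (lo hi nb d : nat) : hi <= nb ->
  ((lo <= d) && (d < nb)) || ~~ ((lo <= d) && (d < hi)).
Proof.
move=> H2; case: (leqP lo d) => H3; case: (ltnP d hi) => H4; case: (ltnP d nb) => H5 //=; lia.
Qed.

Definition dd k m r (lo hi : 'I_k -> nat) (a : 'I_k) o :=
  hole m r o && (lo a <= o %/ m) && (o %/ m < hi a).

Lemma dir1 k (L : seq 'I_k -> Prop) q (c : 'I_k -> nat) (p : 'I_q -> 'I_k -> nat) m r w :
  linear_property L c p -> (forall j i, ~~ odd (p j i)) -> ~~ odd m -> 4 <= m ->
  1 <= r -> r <= m %/ 2 - 1 -> L w -> Cl (Dset m r c p) w.
Proof.
move=> lp pe em m4 r1 rle Lw.
have rm : r.+1 < m by lia.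
have m0 : 0 < m by lia.
have mE : m = m %/ 2 * 2 by rewrite divnK // dvdn2.
set hd := m %/ 2 in mE rle.
have hd0 : 0 < hd by lia.
have [n Hn] := (lp (parikh w)).1 (ex_intro _ w (conj Lw (fun _ => erefl))).
pose h j := n j %% hd. pose l j := n j %/ hd.
pose nb a := \sum_(j < q) l j * (p j a %/ 2).
pose t a := c a + \sum_(j < q) h j * p j a.
have CW : forall a, count_mem a w = t a + m * nb a.
  move=> a; rewrite -[count_mem a w]/(parikh w a) Hn /t -addnA; congr (_ + _).
  rewrite /nb big_distrr -big_split /=; apply: eq_bigr => j _.
  set P := p j a %/ 2.
  have -> : p j a = P * 2 by rewrite divnK // dvdn2.
  rewrite {1}(divn_eq (n j) hd) -/(h j) -/(l j) [in m * _]mE.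
  nia.
have nbN : forall a, m * nb a <= count_mem a w by move=> a; rewrite CW leq_addl.
have lt : lin_set c p t by exists h.
have [wW [LwW pwW]] := (lp t).2 lt.
have WW : Wset m c p wW.
  exists h; split => // j; exact: ltn_pmod.
pose lo0 := fun _ : 'I_k => 0.
pose g := fun e : 'I_k * nat => (e.1, dd m r lo0 nb e.1 e.2).
pose KA (A : seq 'I_k) := fun (b : 'I_k) (o : nat) => (b \in A) || (o < m * nb b).
pose Z A := map g (filter (fun e => KA A e.1 e.2) (occ w)).
pose S := mkw w (dd m r lo0 nb).
have YZ : Yset m r (Z [::]).
  apply: Yset_intro => a; rewrite /Z /g proj_Z.
  rewrite (eq_filter (a2 := fun o => o < m * nb a)) // filter_iota_lt //.
  rewrite /dd /lo0 key // ?leqnn // muln0 subnn subn0 /= cats0 Bl_eq //; last lia.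
  by apply: star_flatten_nseq.
have AP : forall s A, uniq s -> (forall a, a \in s -> a \notin A) -> (forall a, a \in A ++ s) ->
    append_seq (parikh wW) s (Z A) S.
  elim=> [|b s IH] A us dis cov /=.
    rewrite /Z (all_filterP _) // /S /mkw //.
    by apply/allP => e _; rewrite /KA; have := cov e.1; rewrite cats0 => ->.
  move: us => /= /andP[bs us].
  have bA : b \notin A by apply: dis; rewrite mem_head.
  exists (Z (b :: A)); split; last first.
    apply: IH => //.
      move=> a1 sa; rewrite inE negb_or; apply/andP; split.
        by apply/eqP => ab; move: bs; rewrite -ab sa.
      by apply: dis; rewrite inE sa orbT.
    move=> a2; have := cov a2; rewrite !mem_cat !inE.
    by case: (a2 \in A); case: (a2 == b).
  have [H1o H2o] := occ_hyp w b.
  have HK : forall e, e \in occ w -> e.1 == b -> KA (b :: A) e.1 e.2.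
    by move=> e _ eb; rewrite /KA inE eb.
  have [u [v [tt [F1 F2 F3 F4 F5]]]] := @occ_split k b (m * nb b) (fun e => KA (b :: A) e.1 e.2) (occ w) H1o HK.
  have EK : filter (fun e => KA A e.1 e.2) (occ w) = u ++ v.
    rewrite -F1; apply: eq_filter => e; rewrite /KA inE.
    case: (eqVneq e.1 b) => [->|ne] /=; last by rewrite andbT.
    by rewrite (negbTE bA) /= -ltnNge.
  apply: (append1_intro (u := map g u) (v := map g v) (t := map g tt) (d := g (b, 0))).
  - by rewrite /Z EK map_cat.
  - by rewrite /= eqxx.
  - by rewrite (last_map g).
  - by rewrite all_map; apply: sub_all F5.
  - have := shuffle_map g F3.
    suff -> : map g (filter (fun e => (e.1 == b) && (m * nb b <= e.2)) (occ w)) =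
              nseq (parikh wW b) (undot b) by [].
    have Hall : all (pred1 (undot b)) (map g (filter (fun e => (e.1 == b) && (m * nb b <= e.2)) (occ w))).
      rewrite all_map; apply/allP => e; rewrite mem_filter => /andP[/andP[/eqP eb le] _] /=.
      rewrite /g /dd eb.
      have -> : (e.2 %/ m < nb b) = false by rewrite ltn_divLR // ltnNge mulnC le.
      by rewrite andbF.
    rewrite (all_pred1P _ _ Hall) size_map size_filter pwW.
    congr nseq.
    rewrite (eq_count (a2 := predI (fun e : 'I_k * nat => m * nb b <= e.2) (fun e => e.1 == b))); last first.
      by move=> e /=; rewrite andbC.
    rewrite -count_filter /occ occ_proj count_map.
    rewrite (eq_count (a2 := fun o => m * nb b <= o)) // count_iota_ge CW; lia.
  - by rewrite /Z F2 map_cat.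
have DS : Dset m r c p S.
  right; exists (Z [::]), wW; split; first exact: YZ. split; first exact: WW.
  apply: AP; [exact: enum_uniq | by [] | by move=> a2; rewrite mem_enum].
have FS : forall (js : seq 'I_q) (lo : 'I_k -> nat),
    (forall a, lo a + \sum_(j <- js) (p j a %/ 2) = nb a) ->
    mclosure (Dset m r c p) (mkw w (dd m r lo nb)) ->
    mclosure (Dset m r c p) (mkw w (dd m r nb nb)).
  elim=> [|j js IH] lo Hs M0.
    have E : forall a, lo a = nb a by move=> a2; rewrite -Hs big_nil addn0.
    suff -> : mkw w (dd m r nb nb) = mkw w (dd m r lo nb) by [].
    by rewrite /mkw; apply: eq_map => e; rewrite /dd E.
  pose hi a := lo a + p j a %/ 2.
  have Hs' : forall a, hi a + \sum_(j0 <- js) (p j0 a %/ 2) = nb a.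
    by move=> a2; rewrite -Hs big_cons addnA.
  have lohi : forall a, lo a <= hi a by move=> a2; exact: leq_addr.
  have hinb : forall a, hi a <= nb a by move=> a2; rewrite -(Hs' a2) leq_addr.
  apply: (IH hi Hs').
  case: (boolP [forall a, p j a == 0]) => [/forallP z | /forallPn [a0 nz]].
    suff -> : mkw w (dd m r hi nb) = mkw w (dd m r lo nb) by [].
    by rewrite /mkw; apply: eq_map => e; rewrite /dd /hi (eqP (z e.1)) div0n addn0.
  pose Fw := mkw w (fun a o => ~~ dd m r lo hi a o).
  pose y := mkw w (dd m r lo hi).
  have Py : forall a, proj a y = nseq (m * lo a) (undot a) ++
      flatten (nseq (hi a - lo a) (Rword m r a)) ++ nseq (count_mem a w - m * hi a) (undot a).
    move=> a2; rewrite /y /mkw proj_mkw /dd key //; last first.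
      by apply: leq_trans (nbN a2); rewrite leq_mul2l hinb orbT.
    by rewrite Bl_eq //; lia.
  have Fy : Fw = switch y by rewrite /Fw /y /mkw /switch -map_comp.
  have PF : forall a, parikh (piSigma Fw) a = p j a.
    move=> a2; rewrite /parikh cnt_piSigma /Uu Fy proj_switch count_map.
    rewrite (eq_count (a2 := fun l : xletter k => l.2)); last by move=> x /=; rewrite negbK.
    rewrite Py !count_cat !count_nseq /= count_flatten_nseq count_snd_Rword /hi addKn.
    by rewrite !mul0n add0n addn0 divnK // dvdn2.
  have DF : Dset m r c p Fw.
    left; split; last by exists j.
    split.
      exists y; split => // a2; rewrite Py.
      apply: star_cat; first by apply: star_nseq1; right.
      apply: star_cat; last by apply: star_nseq1; right.
      by apply: star_flatten_nseq; left.
    apply/negP => al.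
    have : parikh (piSigma Fw) a0 = 0.
      rewrite /parikh /piSigma filter_none //; apply: sub_all al => x /= ->; done.
    by rewrite PF => /eqP; rewrite (negbTE nz).
  have MM := wmatch_map (P := fun e => dd m r lo nb e.1 e.2) (Q := fun e => ~~ dd m r lo hi e.1 e.2) (O := occ w).
  have Hall : all (fun e : 'I_k * nat => dd m r lo nb e.1 e.2 || ~~ dd m r lo hi e.1 e.2) (occ w).
    apply/allP => e _; rewrite /dd; case: (hole m r e.2) => //=.
    exact: interval_or.
  have := mc_match M0 (mc_base DF) (MM Hall).
  suff -> : map (fun e => (e.1, dd m r lo nb e.1 e.2 && ~~ dd m r lo hi e.1 e.2)) (occ w) =
            mkw w (dd m r hi nb) by [].
  rewrite /mkw; apply: eq_map => e /=; rewrite /dd; congr pair.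
  case: (hole m r e.2) => //=; apply: interval_bool; [exact: lohi | exact: hinb].
have := FS (flatten [seq nseq (l j) j | j <- enum 'I_q]) lo0.
have Hs0 : forall a, lo0 a + \sum_(j <- flatten [seq nseq (l j) j | j <- enum 'I_q]) (p j a %/ 2) = nb a.
  by move=> a2; rewrite sum_js.
move=> /(_ Hs0 (mc_base DS)).
suff -> : mkw w (dd m r nb nb) = map (@undot k) w by [].
rewrite /mkw -{2}(occ_fst (fun _ => 0) w) -map_comp; apply: eq_map => e /=.
rewrite /dd; congr pair.
by case: (leqP (nb e.1) (e.2 %/ m)) => ?; rewrite ?andbF ?andbT //= andbF.
Qed.


Lemma dir2 k (L : seq 'I_k -> Prop) q (c : 'I_k -> nat) (p : 'I_q -> 'I_k -> nat) m r w :
  comm_lang L -> linear_property L c p -> ~~ odd m -> 4 <= m ->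
  1 <= r -> r <= m %/ 2 - 1 -> Cl (Dset m r c p) w -> L w.
Proof.
move=> cl lp em m4 r1 rle.
have rm : r.+1 < m by lia.
have I : forall x, mclosure (Dset m r c p) x -> Inv c p m r x.
  move=> x; elim=> [y [Xy|Yy]|u v z _ Iu _ Iv E].
  - exact: X_inv.
  - exact: YW_inv.
  - by apply: (Inv_match _ _ _ Iu Iv E) => //; lia.
move=> /I /(final_inv em) /(lp (parikh w)).2 [w' [Lw' pw']].
exact: (cl w' w pw').1 Lw'.
Qed.

Theorem theorem5 (k : nat) (L : seq 'I_k -> Prop) (q : nat)
  (c : 'I_k -> nat) (p : 'I_q -> 'I_k -> nat) :
  comm_lang L ->
  linear_property L c p ->
  0 < q ->
  (forall (j : 'I_q) (i : 'I_k), ~~ odd (p j i)) ->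
  forall m r : nat,
    ~~ odd m -> 4 <= m ->
    1 <= r -> r <= m %/ 2 - 1 ->
    forall w : seq 'I_k, L w <-> Cl (Dset m r c p) w.
Proof.
move=> cl lp _ pe m r em m4 r1 rle w; split.
  exact: dir1.
exact: dir2.
Qed.
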